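(* Let $n\ge1$ and $a_k(\rho)=\tfrac12(\rho^k+\rho^{-k})$. Let $\rho_n^*>1$ denote the unique root in $(1,\infty)$ of $a_{n+1}(\rho)-(n+1)a_1(\rho)=0$. Then $$\min_{z\in\mathcal{E}_\rho}|U_n(z)|=\begin{cases}\dfrac{\rho^{n+1}-\rho^{-n-1}}{\rho+\rho^{-1}}, & n\text{ odd},\ \rho>1,\\[2mm] \dfrac{\rho^{n+1}+\rho^{-n-1}}{\rho+\rho^{-1}}, & n\text{ even},\ \rho\ge\rho_n^*,\end{cases}$$ and in both cases the minimum is attained if and only if $z=\pm\tfrac{i}{2}(\rho-\rho^{-1})$.
   Context: $U_n$ is the Chebyshev polynomial of the second kind, $U_n(\cos\theta)=\sin((n+1)\theta)/\sin\theta$. The Bernstein ellipse is $\mathcal{E}_\rho=\{\tfrac12(u+u^{-1}): u=\rho e^{i\theta},\ 0\le\theta<2\pi\}$. *)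

(* Defs.v *)
From Stdlib Require Import Reals.
Open Scope R_scope.

Record C := mkC { Re : R ; Im : R }.

Definition Cadd (z w : C) : C := mkC (Re z + Re w) (Im z + Im w).
Definition Csub (z w : C) : C := mkC (Re z - Re w) (Im z - Im w).
Definition Cmul (z w : C) : C :=
  mkC (Re z * Re w - Im z * Im w) (Re z * Im w + Im z * Re w).
Definition Cone : C := mkC 1 0.
Definition Ctwo : C := mkC 2 0.
Definition Cmod (z : C) : R := sqrt (Re z * Re z + Im z * Im z).

Fixpoint chebU (n : nat) (z : C) : C :=
  match n with
  | O => Cone
  | S m =>
    match m with
    | O => Cmul Ctwo z
    | S k => Csub (Cmul (Cmul Ctwo z) (chebU m z)) (chebU k z)
    end
  end.

Definition a_k (k : nat) (rho : R) : R := (rho ^ k + / rho ^ k) / 2.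

(* Bernstein ellipse E_rho = { (u + u^{-1})/2 : u = rho e^{i theta} },
   written out: (u+u^{-1})/2 = (rho+rho^{-1})/2 cos theta + i (rho-rho^{-1})/2 sin theta. *)
Definition in_bernstein (rho : R) (z : C) : Prop :=
  exists theta : R,
    z = mkC ((rho + / rho) / 2 * cos theta) ((rho - / rho) / 2 * sin theta).

Definition min_attained_exactly (n : nat) (rho m : R) : Prop :=
  (forall z, in_bernstein rho z -> m <= Cmod (chebU n z)) /\
  (exists z, in_bernstein rho z /\ Cmod (chebU n z) = m) /\
  (forall z, in_bernstein rho z ->
     (Cmod (chebU n z) = m <->
      (z = mkC 0 ((rho - / rho) / 2) \/ z = mkC 0 (- ((rho - / rho) / 2))))).

(* Main.v *)
Require Import Defs.
From Stdlib Require Import Reals Arith Lra Lia Psatz.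
Open Scope R_scope.

Definition E (rho th : R) : Defs.C :=
  mkC ((rho + / rho) / 2 * cos th) ((rho - / rho) / 2 * sin th).
Definition W (rho th : R) (k : nat) : Defs.C :=
  mkC ((rho ^ k - / rho ^ k) * cos (INR k * th)) ((rho ^ k + / rho ^ k) * sin (INR k * th)).
Definition Cn2 (z : Defs.C) : R := Re z * Re z + Im z * Im z.

Lemma C_ext (a b c d : R) : a = c -> b = d -> mkC a b = mkC c d.
Proof. intros; subst; reflexivity. Qed.

Lemma recW rho th k : rho <> 0 ->
  W rho th (S (S k)) = Csub (Cmul (Cmul Ctwo (E rho th)) (W rho th (S k))) (W rho th k).
Proof.
  intros Hr.
  assert (Hq : rho ^ k <> 0) by (apply pow_nonzero; auto).
  set (b := INR (S k) * th).
  assert (E1 : INR (S (S k)) * th = b + th) by (unfold b; rewrite (S_INR (S k)); ring).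
  assert (E2 : INR k * th = b - th) by (unfold b; rewrite (S_INR k); ring).
  unfold W, E, Csub, Cmul, Ctwo; cbv [Re Im].
  rewrite E1, E2, cos_plus, sin_plus, cos_minus, sin_minus.
  fold b.
  change (rho ^ S (S k)) with (rho * (rho * rho^k)).
  change (rho ^ S k) with (rho * rho^k).
  apply C_ext; field; auto.
Qed.

Lemma Cmul_distr (c X Y D : Defs.C) :
  Cmul (Csub (Cmul c X) Y) D = Csub (Cmul c (Cmul X D)) (Cmul Y D).
Proof. destruct c, X, Y, D; unfold Cmul, Csub; simpl; apply C_ext; ring. Qed.

Lemma chebW rho th n : rho <> 0 ->
  Cmul (chebU n (E rho th)) (W rho th 1) = W rho th (S n).
Proof.
  intros Hr.
  assert (H : forall n, Cmul (chebU n (E rho th)) (W rho th 1) = W rho th (S n) /\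
                   Cmul (chebU (S n) (E rho th)) (W rho th 1) = W rho th (S (S n))).
  { induction n0 as [|k [IH1 IH2]].
    - split.
      + destruct (W rho th 1); unfold Cmul, Cone; simpl; apply C_ext; ring.
      + rewrite recW by auto. simpl chebU.
        unfold W at 3. simpl INR. rewrite Rmult_0_l, sin_0, cos_0.
        destruct (E rho th), (W rho th 1); unfold Cmul, Csub, Ctwo; simpl; rewrite Rinv_1; apply C_ext; ring.
    - split; auto.
      change (chebU (S (S k)) (E rho th)) with
        (Csub (Cmul (Cmul Ctwo (E rho th)) (chebU (S k) (E rho th))) (chebU k (E rho th))).
      rewrite Cmul_distr, IH1, IH2. symmetry. apply recW; auto. }
  apply H.
Qed.

Lemma Cn2_mul x y : Cn2 (Cmul x y) = Cn2 x * Cn2 y.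
Proof. destruct x, y; unfold Cn2, Cmul; simpl; ring. Qed.

Lemma sin_mult_bound k a : Rabs (sin (INR k * a)) <= INR k * Rabs (sin a).
Proof.
  induction k as [|k IH].
  - simpl. rewrite Rmult_0_l, sin_0, Rabs_R0. lra.
  - rewrite S_INR.
    replace ((INR k + 1) * a) with (INR k * a + a) by ring.
    rewrite sin_plus.
    pose proof (Rabs_triang (sin (INR k * a) * cos a) (cos (INR k * a) * sin a)).
    rewrite !Rabs_mult in H.
    assert (Rabs (cos a) <= 1) by (apply Rabs_le; apply COS_bound).
    assert (Rabs (cos (INR k * a)) <= 1) by (apply Rabs_le; apply COS_bound).
    pose proof (Rabs_pos (sin (INR k * a))). pose proof (Rabs_pos (sin a)).
    nra.
Qed.

Lemma sin_mult_strict k a : (2 <= k)%nat -> sin a <> 0 ->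
  Rabs (sin (INR k * a)) < INR k * Rabs (sin a).
Proof.
  intros Hk Hs. destruct k as [|k]; [lia|].
  rewrite S_INR.
  replace ((INR k + 1) * a) with (INR k * a + a) by ring.
  rewrite sin_plus.
  pose proof (Rabs_triang (sin (INR k * a) * cos a) (cos (INR k * a) * sin a)).
  rewrite !Rabs_mult in H.
  pose proof (sin_mult_bound k a).
  assert (Hc : Rabs (cos a) < 1).
  { pose proof (sin2_cos2 a). unfold Rsqr in H1.
    assert (0 < sin a * sin a) by (apply Rsqr_pos_lt; auto).
    apply Rabs_def1; nra. }
  assert (Rabs (cos (INR k * a)) <= 1) by (apply Rabs_le; apply COS_bound).
  pose proof (Rabs_pos (sin (INR k * a))). pose proof (Rabs_pos (sin a)).
  pose proof (Rabs_pos (cos a)).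
  assert (0 < Rabs (sin a)) by (apply Rabs_pos_lt; auto).
  assert (1 <= INR k) by (apply (le_INR 1); lia).
  destruct (Req_dec (sin (INR k * a)) 0) as [E|E].
  - rewrite E in H |- *. rewrite Rabs_R0 in H.
    assert (Rabs (cos (INR k * a)) * Rabs (sin a) <= Rabs (sin a)) by nra. nra.
  - assert (0 < Rabs (sin (INR k * a))) by (apply Rabs_pos_lt; auto).
    assert (Rabs (cos (INR k * a)) * Rabs (sin a) <= Rabs (sin a)) by nra.
    assert (Rabs (sin (INR k * a)) * Rabs (cos a) < Rabs (sin (INR k * a))) by nra.
    nra.
Qed.

Lemma sin_period2 y m : sin (y + INR m * PI) ^ 2 = sin y ^ 2.
Proof.
  induction m as [|m IH].
  - simpl. rewrite Rmult_0_l, Rplus_0_r. reflexivity.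
  - rewrite S_INR. replace (y + (INR m + 1) * PI) with ((y + INR m * PI) + PI) by ring.
    rewrite neg_sin. rewrite <- IH. ring.
Qed.

Lemma cos_odd_bound m th :
  cos (INR (2 * m + 1) * th) ^ 2 <= INR (2 * m + 1) ^ 2 * cos th ^ 2 /\
  ((1 <= m)%nat -> cos th <> 0 ->
   cos (INR (2 * m + 1) * th) ^ 2 < INR (2 * m + 1) ^ 2 * cos th ^ 2).
Proof.
  set (N := (2 * m + 1)%nat).
  assert (Hc : cos th = sin (PI / 2 + th)) by apply cos_sin.
  assert (HN : sin (INR N * (PI/2 + th)) ^ 2 = cos (INR N * th) ^ 2).
  { replace (INR N * (PI/2 + th)) with ((PI/2 + INR N * th) + INR m * PI).
    - rewrite sin_period2, <- cos_sin. reflexivity.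
    - unfold N. rewrite plus_INR, mult_INR. simpl INR. field. }
  rewrite <- HN, Hc.
  pose proof (pos_INR N).
  split.
  - pose proof (sin_mult_bound N (PI/2 + th)).
    pose proof (Rabs_pos (sin (INR N * (PI / 2 + th)))).
    rewrite <- (pow2_abs (sin (INR N * _))), <- (pow2_abs (sin (PI/2 + th))).
    pose proof (Rabs_pos (sin (PI/2+th))).
    nra.
  - intros Hm Hz.
    assert (2 <= N)%nat by (unfold N; lia).
    pose proof (sin_mult_strict N (PI/2 + th) H0 Hz).
    pose proof (Rabs_pos (sin (INR N * (PI / 2 + th)))).
    rewrite <- (pow2_abs (sin (INR N * _))), <- (pow2_abs (sin (PI/2 + th))).
    pose proof (Rabs_pos (sin (PI/2+th))).
    nra.
Qed.

Lemma zeros th : cos th = 0 -> forall m,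
  sin (INR (2 * m) * th) = 0 /\ cos (INR (2 * m + 1) * th) = 0.
Proof.
  intros H.
  assert (S2 : sin (2 * th) = 0) by (rewrite sin_2a, H; ring).
  induction m as [|m [IH1 IH2]].
  - simpl. rewrite Rmult_0_l, sin_0, Rmult_1_l. auto.
  - replace (INR (2 * S m) * th) with (INR (2 * m) * th + 2 * th)
      by (rewrite !mult_INR, (S_INR m); simpl INR; ring).
    replace (INR (2 * S m + 1) * th) with (INR (2 * m + 1) * th + 2 * th)
      by (rewrite !plus_INR, !mult_INR, (S_INR m); simpl INR; ring).
    rewrite sin_plus, cos_plus, IH1, IH2, S2. split; ring.
Qed.

Definition gpol (n : nat) (r : R) : R :=
  (r ^ (2 * (n + 1)) + 1) / 2 - INR (n + 1) * (r ^ (n + 2) + r ^ n) / 2.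

Lemma gpol_eq n r : 0 < r ->
  gpol n r = r ^ (n + 1) * (a_k (n + 1) r - INR (n + 1) * a_k 1 r).
Proof.
  intros Hr. unfold gpol, a_k.
  assert (Hq : r ^ n <> 0) by (apply pow_nonzero; lra).
  replace (2 * (n + 1))%nat with ((n + 1) + (n + 1))%nat by lia.
  rewrite pow_add. replace (n + 2)%nat with (n + 1 + 1)%nat by lia.
  rewrite !pow_add. simpl (r ^ 1).
  field. split; [lra|auto].
Qed.

Lemma gpol_cont n : continuity (gpol n).
Proof. unfold gpol. reg. Qed.

Lemma h_nonneg n rho rho_star : (1 <= n)%nat -> 1 < rho_star ->
  a_k (n + 1) rho_star - INR (n + 1) * a_k 1 rho_star = 0 ->
  (forall r : R, 1 < r -> a_k (n + 1) r - INR (n + 1) * a_k 1 r = 0 -> r = rho_star) ->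
  rho_star <= rho ->
  0 <= a_k (n + 1) rho - INR (n + 1) * a_k 1 rho.
Proof.
  intros Hn H1 H2 Hu Hle.
  destruct (Rle_lt_dec 0 (a_k (n + 1) rho - INR (n + 1) * a_k 1 rho)) as [|Hneg]; auto.
  exfalso.
  set (N := INR (n + 1)).
  pose proof (le_INR 1 n Hn) as Hn'. simpl INR in Hn'.
  assert (HN : 2 <= N) by (unfold N; rewrite plus_INR; simpl INR; lra).
  set (R0 := 2 * N + rho).
  assert (Hg1 : gpol n rho < 0).
  { rewrite gpol_eq by lra. pose proof (pow_lt rho (n+1)). nra. }
  assert (Hg2 : 0 < gpol n R0).
  { unfold gpol.
    assert (HR : 2 * N < R0) by (unfold R0; lra).
    assert (HR1 : 1 <= R0) by lra.
    replace (2 * (n + 1))%nat with ((n + 2) + n)%nat by lia.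
    rewrite pow_add.
    assert (R0 ^ 1 <= R0 ^ n) by (apply Rle_pow; auto).
    assert (R0 ^ n <= R0 ^ (n+2)) by (apply Rle_pow; [auto|lia]).
    assert (0 < R0 ^ (n+2)) by (apply pow_lt; lra).
    simpl (R0 ^ 1) in *. fold N.
    nra. }
  destruct (IVT (gpol n) rho R0 (gpol_cont n)) as [z [[Hz1 Hz2] Hz]]; auto.
  { unfold R0; lra. }
  rewrite gpol_eq in Hz by lra.
  assert (0 < z ^ (n + 1)) by (apply pow_lt; lra).
  assert (Hh : a_k (n + 1) z - INR (n + 1) * a_k 1 z = 0).
  { apply (Rmult_eq_reg_l (z ^ (n+1))); lra. }
  pose proof (Hu z ltac:(lra) Hh). subst z.
  assert (rho = rho_star) by lra. subst. lra.
Qed.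

Lemma odd_core X p q r ri c s cN sN : p * q = 1 -> r * ri = 1 -> 1 < r -> 1 < p ->
  c^2 + s^2 = 1 -> cN^2 + sN^2 = 1 -> 0 <= X -> (c = 0 -> sN = 0) ->
  X * ((r - ri)^2 * c^2 + (r + ri)^2 * s^2) = (p - q)^2 * cN^2 + (p + q)^2 * sN^2 ->
  ((p - q) / (r + ri)) * ((p - q) / (r + ri)) <= X /\
  (X = ((p - q) / (r + ri)) * ((p - q) / (r + ri)) <-> c = 0).
Proof.
  intros Hpq Hr Hr1 Hp Hcs HcsN HX Hz HXd.
  assert (Hri : 0 < ri) by nra.
  assert (Hq : q < 1) by nra.
  set (m := (p - q) / (r + ri)).
  set (B := (r + ri)^2). set (d := (r - ri)^2 * c^2 + (r + ri)^2 * s^2). fold d in HXd.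
  assert (HmB : m * m * B = (p - q)^2) by (unfold m, B; field; lra).
  assert (HBd : B - d = 4 * c^2) by (unfold B, d; nra).
  assert (Hw : (p - q)^2 * cN^2 + (p + q)^2 * sN^2 - (p-q)^2 = 4 * sN^2) by nra.
  assert (HB : 0 < B) by (unfold B; nra).
  assert (Hmp : 0 < m * m) by (unfold m; assert (0 < (p-q)/(r+ri)) by (apply Rdiv_lt_0_compat; lra); nra).
  assert (Hc2 : 0 <= c^2) by nra. assert (HsN2 : 0 <= sN^2) by nra.
  assert (HX4 : 0 <= X * (4 * c^2)) by (apply Rmult_le_pos; lra).
  assert (HXB : X * B = X * d + X * (4 * c^2)) by (rewrite <- HBd; ring).
  assert (H1 : m * m * B <= X * B) by (fold d in HXd; lra).
  split.
  - apply (Rmult_le_reg_r B); auto.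
  - split.
    + intros HXm.
      assert (X * (4 * c^2) <= 0) by (assert (X * B = (p-q)^2) by (rewrite HXm; exact HmB); lra).
      assert (0 < X) by lra.
      assert (c^2 <= 0) by nra. nra.
    + intros Hc. pose proof (Hz Hc) as HsN. subst c sN.
      assert (Hs1 : s^2 = 1) by lra. assert (HcN1 : cN^2 = 1) by lra.
      assert (HdB : d = B) by (unfold d, B; rewrite Hs1; ring).
      assert (X * B = m * m * B).
      { rewrite HmB, <- HdB, HXd, HcN1. ring. }
      apply (Rmult_eq_reg_r B); lra.
Qed.

Lemma even_core X p q r ri c s cN sN K : p * q = 1 -> r * ri = 1 -> 1 < r -> 0 < p ->
  c^2 + s^2 = 1 -> cN^2 + sN^2 = 1 -> 0 <= X -> 0 <= K ->
  K * (r + ri) <= p + q ->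
  cN^2 <= K^2 * c^2 -> (c <> 0 -> cN^2 < K^2 * c^2) -> (c = 0 -> cN = 0) ->
  X * ((r - ri)^2 * c^2 + (r + ri)^2 * s^2) = (p - q)^2 * cN^2 + (p + q)^2 * sN^2 ->
  ((p + q) / (r + ri)) * ((p + q) / (r + ri)) <= X /\
  (X = ((p + q) / (r + ri)) * ((p + q) / (r + ri)) <-> c = 0).
Proof.
  intros Hpq Hr Hr1 Hp Hcs HcsN HX HK HKr Hb Hbs Hz HXd.
  assert (Hri : 0 < ri) by nra.
  assert (Hq : 0 < q) by nra.
  set (m := (p + q) / (r + ri)).
  set (A := (p + q)^2).
  set (B := (r + ri)^2). set (d := (r - ri)^2 * c^2 + (r + ri)^2 * s^2).
  set (w := (p - q)^2 * cN^2 + (p + q)^2 * sN^2).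
  assert (HmB : m * m * B = A) by (unfold m, A, B; field; lra).
  assert (Hd : d = B - 4 * c^2) by (unfold B, d; nra).
  assert (Hw : w = A - 4 * cN^2) by (unfold w, A; nra).
  assert (HB : 0 < B) by (unfold B; nra).
  assert (HB4 : B - 4 = (r - ri)^2) by (unfold B; nra).
  assert (Hrr : 0 < (r - ri)^2) by (assert (0 < r - ri) by nra; nra).
  assert (Hdp : 0 < d) by (rewrite Hd; nra).
  assert (HAK : K^2 * B <= A).
  { unfold A, B. assert (0 <= K * (r + ri)) by nra.
    replace (K^2 * (r+ri)^2) with ((K * (r+ri))^2) by ring. nra. }
  assert (Hc2 : 0 <= c^2) by nra.
  assert (Hkey : w * B - A * d = 4 * (A * c^2 - B * cN^2)) by (rewrite Hw, Hd; ring).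
  assert (Hk2 : B * cN^2 <= A * c^2).
  { assert (B * cN^2 <= B * (K^2 * c^2)) by (apply Rmult_le_compat_l; lra). nra. }
  assert (H1 : A <= X * B).
  { assert ((X * B - A) * d >= 0).
    { replace ((X * B - A) * d) with (X * d * B - A * d) by ring.
      fold d in HXd. rewrite HXd. fold w. lra. }
    nra. }
  split.
  - apply (Rmult_le_reg_r B); auto. lra.
  - split.
    + intros HXm.
      assert (HXB : X * B = A) by (rewrite HXm; lra).
      assert (Heq : A * c^2 = B * cN^2).
      { fold d in HXd. fold w in HXd.
        assert (w * B - A * d = 0).
        { rewrite <- HXd. replace (X * d * B - A * d) with ((X * B - A) * d) by ring.
          rewrite HXB. ring. }
        lra. }
      destruct (Req_dec c 0) as [|Hc]; auto. exfalso.
      pose proof (Hbs Hc).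
      assert (B * cN^2 < B * (K^2 * c^2)) by (apply Rmult_lt_compat_l; lra). nra.
    + intros Hc. pose proof (Hz Hc) as HcN. subst c cN.
      assert (X * B = m * m * B).
      { rewrite HmB. fold d in HXd. fold w in HXd. rewrite Hd, Hw in HXd. lra. }
      apply (Rmult_eq_reg_r B); lra.
Qed.

Lemma Cn2_nonneg z : 0 <= Cn2 z.
Proof. unfold Cn2. pose proof (Rle_0_sqr (Re z)); pose proof (Rle_0_sqr (Im z)); unfold Rsqr in *; lra. Qed.

Lemma sc2 x : cos x ^ 2 + sin x ^ 2 = 1.
Proof. pose proof (sin2_cos2 x). unfold Rsqr in H. lra. Qed.

Lemma reduce n rho m : 1 < rho -> 0 <= m ->
  (forall th, m * m <= Cn2 (chebU n (E rho th)) /\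
              (Cn2 (chebU n (E rho th)) = m * m <-> cos th = 0)) ->
  min_attained_exactly n rho m.
Proof.
  intros Hr Hm H.
  assert (Hsq : forall th, Cmod (chebU n (E rho th)) = m <-> cos th = 0).
  { intros th. destruct (H th) as [_ Hi]. rewrite <- Hi. unfold Cmod. fold (Cn2 (chebU n (E rho th))).
    pose proof (Cn2_nonneg (chebU n (E rho th))).
    split; intros HH.
    - rewrite <- HH. rewrite sqrt_sqrt; auto.
    - rewrite HH. apply sqrt_square; auto. }
  assert (Hrp : 0 < rho + / rho) by (pose proof (Rinv_0_lt_compat rho); lra).
  assert (Hpt : forall th, (E rho th = mkC 0 ((rho - / rho) / 2) \/
                           E rho th = mkC 0 (- ((rho - / rho) / 2))) <-> cos th = 0).
  { intros th. split.
    - intros [HH|HH]; injection HH; intros _ H1; nra.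
    - intros Hc. pose proof (sc2 th) as Hs. rewrite Hc in Hs.
      assert ((sin th - 1) * (sin th + 1) = 0) by nra.
      destruct (Rmult_integral _ _ H0) as [H2|H2]; [left|right]; unfold E; rewrite Hc;
        apply C_ext; try ring.
      + replace (sin th) with 1 by lra. ring.
      + replace (sin th) with (-1) by lra. ring. }
  split; [|split].
  - intros z [th Hz]. change (z = E rho th) in Hz. subst z.
    destruct (H th) as [H1 _]. unfold Cmod. fold (Cn2 (chebU n (E rho th))).
    rewrite <- (sqrt_square m) by auto. apply sqrt_le_1_alt. auto.
  - exists (E rho (PI / 2)). split.
    + exists (PI / 2). reflexivity.
    + apply Hsq. apply cos_PI2.
  - intros z [th Hz]. change (z = E rho th) in Hz. subst z.
    rewrite Hsq, Hpt. tauto.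
Qed.

Lemma keyeq n rho th : rho <> 0 ->
  Cn2 (chebU n (E rho th)) * ((rho - / rho)^2 * cos th ^2 + (rho + / rho)^2 * sin th ^2) =
  (rho ^ (n+1) - / rho ^ (n+1))^2 * cos (INR (n+1) * th) ^ 2 +
  (rho ^ (n+1) + / rho ^ (n+1))^2 * sin (INR (n+1) * th) ^ 2.
Proof.
  intros Hr. pose proof (chebW rho th n Hr) as H.
  apply (f_equal Cn2) in H. rewrite Cn2_mul in H.
  rewrite Nat.add_1_r.
  transitivity (Cn2 (chebU n (E rho th)) * Cn2 (W rho th 1)).
  - f_equal. unfold Cn2, W. cbv [Re Im].
    replace (INR 1 * th) with th by (simpl; ring). simpl (rho ^ 1).
    rewrite Rmult_1_r. ring.
  - rewrite H. unfold Cn2, W. cbv [Re Im]. ring.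
Qed.

Theorem mainTheorem6 (n : nat) (rho : R) :
  (1 <= n)%nat -> 1 < rho ->
  (Nat.odd n = true ->
     min_attained_exactly n rho
       ((rho ^ (n + 1) - / rho ^ (n + 1)) / (rho + / rho))) /\
  (Nat.even n = true ->
     forall rho_star : R,
       1 < rho_star ->
       a_k (n + 1) rho_star - INR (n + 1) * a_k 1 rho_star = 0 ->
       (forall r : R, 1 < r -> a_k (n + 1) r - INR (n + 1) * a_k 1 r = 0 -> r = rho_star) ->
       rho_star <= rho ->
       min_attained_exactly n rho
         ((rho ^ (n + 1) + / rho ^ (n + 1)) / (rho + / rho))).
Proof.
  intros Hn Hr.
  assert (Hr0 : rho <> 0) by lra.
  assert (Hri : 0 < / rho) by (apply Rinv_0_lt_compat; lra).
  assert (Hrri : rho * / rho = 1) by (field; auto).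
  assert (Hp : 1 < rho ^ (n + 1)) by (apply Rlt_pow_R1; [auto|lia]).
  assert (Hpq : rho ^ (n+1) * / rho ^ (n+1) = 1) by (field; lra).
  assert (Hqp : 0 < / rho ^ (n+1)) by (apply Rinv_0_lt_compat; lra).
  split.
  - intros Hodd. apply Nat.odd_spec in Hodd. destruct Hodd as [k Hk].
    apply reduce; auto.
    { unfold Rdiv; apply Rmult_le_pos; [nra | left; apply Rinv_0_lt_compat; lra]. }
    intros th.
    apply odd_core with (s := sin th) (cN := cos (INR (n+1) * th)) (sN := sin (INR (n+1) * th));
      auto using sc2, Cn2_nonneg.
    all: try (rewrite Rplus_comm; apply sc2).
    + intros Hc. replace (n + 1)%nat with (2 * (k + 1))%nat by lia.
      apply (zeros th Hc (k+1)).
    + apply keyeq; auto.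
  - intros Heven rs H1 H2 H3 H4.
    pose proof (h_nonneg n rho rs Hn H1 H2 H3 H4) as Hh.
    apply Nat.even_spec in Heven. destruct Heven as [k Hk].
    apply reduce; auto.
    { unfold Rdiv; apply Rmult_le_pos; [nra | left; apply Rinv_0_lt_compat; lra]. }
    intros th.
    assert (Hk1 : (1 <= k)%nat) by lia.
    assert (HnN : (n + 1 = 2 * k + 1)%nat) by lia.
    destruct (cos_odd_bound k th) as [Hb Hbs].
    rewrite <- HnN in Hb, Hbs.
    apply even_core with (s := sin th) (cN := cos (INR (n+1) * th)) (sN := sin (INR (n+1) * th))
      (K := INR (n + 1)); auto using sc2, Cn2_nonneg, pos_INR.
    all: try (rewrite Rplus_comm; apply sc2).
    all: try lra.
    + unfold a_k in Hh. simpl (rho ^ 1) in Hh. rewrite Rmult_1_r in Hh. lra.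
    + intros Hc. rewrite HnN. apply (zeros th Hc k).
    + apply keyeq; auto.
Qed.
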